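(* Let $\alpha,\beta,\eta\in\mathbb{C}$. (1)(i) For $TSV(a,b)$ with $(a,b)\neq(1,0)$ and $\alpha\neq0$, a nontrivial extension $0\to M_{\alpha,\beta}\to E\to\mathbb{C}c_\eta\to0$ exists iff $\beta+\eta=0$ and $\alpha=1$. In this case $\dim\mathrm{Ext}(\mathbb{C}c_{-\beta},M_{1,\beta})=1$ and every nontrivial extension is equivalent to $E=\mathbb{C}[\partial]v\oplus\mathbb{C}c_\eta$ with $L_\lambda c_\eta=kv$, $Y_\lambda c_\eta=M_\lambda c_\eta=0$, $\partial c_\eta=\eta c_\eta+kv$ for some $k\neq0$. (1)(ii) For $TSV(1,0)$ and $(\alpha,\gamma)\neq(0,0)$, a nontrivial extension $0\to M_{\alpha,\beta,\gamma}\to E\to\mathbb{C}c_\eta\to0$ exists iff $\beta+\eta=0$ and $(\alpha,\gamma)=(1,0)$. In this case $\dim\mathrm{Ext}(\mathbb{C}c_{-\beta},M_{1,\beta,0})=1$ and every nontrivial extension is equivalent to the one with $L_\lambda c_\eta=kv$, $Y_\lambda c_\eta=M_\lambda c_\eta=0$, $\partial c_\eta=\eta c_\eta+kv$ for some $k\neq0$. (2) For $TSV(c)$ and $\alpha\neq0$, a nontrivial extension $0\to M_{\alpha,\beta}\to E\to\mathbb{C}c_\eta\to0$ exists iff $\beta+\eta=0$ and $\alpha=1$. In this case $\dim\mathrm{Ext}(\mathbb{C}c_{-\beta},M_{1,\beta})=1$ and every nontrivial extension is equivalent to the one with $L_\lambda c_\eta=kv$, $Y_\lambda c_\eta=M_\lambda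 c_\eta=0$, $\partial c_\eta=\eta c_\eta+kv$ for some $k\neq0$.
   Context: A conformal module over a Lie conformal algebra $\mathcal{R}$ is a $\mathbb{C}[\partial]$-module $V$ with $\mathbb{C}$-linear maps $a\otimes v\mapsto a_\lambda v\in V[\lambda]$ such that $(\partial a)_\lambda v=-\lambda a_\lambda v$, $a_\lambda(\partial v)=(\partial+\lambda)a_\lambda v$, and $a_\lambda(b_\mu v)-b_\mu(a_\lambda v)=[a_\lambda b]_{\lambda+\mu}v$. $TSV(a,b)$ ($a,b\in\mathbb{C}$) is the free $\mathbb{C}[\partial]$-module on $L,Y,M$ with $[L_\lambda L]=(\partial+2\lambda)L$, $[L_\lambda Y]=(\partial+a\lambda+b)Y$, $[L_\lambda M]=(\partial+2(a-1)\lambda+2b)M$, $[Y_\lambda Y]=(\partial+2\lambda)M$, $[Y_\lambda M]=[M_\lambda M]=0$. $TSV(c)$ ($c\in\mathbb{C}$) is the free $\mathbb{C}[\partial]$-module on $L,Y,M$ with $[L_\lambda L]=(\partial+2\lambda)L$, $[L_\lambda Y]=(\partial+\frac32\lambda+c)Y$, $[L_\lambda M]=(\partial+2c)M$, $[Y_\lambda Y]=(\partial+2\lambda)(-\partial-2c)M$, $[Y_\lambda M]=[M_\lambda M]=0$. For $TSV(a,b)$ with $(a,b)\neq(1,0)$ and for $TSV(c)$, $M_{\alpha,\beta}=\mathbb{C}[\partial]v$ ($\alpha\neq0$) has $L_\lambda v=(\partial+\alpha\lambda+\beta)v$, $Y_\lambda v=M_\lambda v=0$. For $TSV(1,0)$,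 $M_{\alpha,\beta,\gamma}=\mathbb{C}[\partial]v$ ($(\alpha,\gamma)\neq(0,0)$) has $L_\lambda v=(\partial+\alpha\lambda+\beta)v$, $Y_\lambda v=\gamma v$, $M_\lambda v=0$. $\mathbb{C}c_\eta$ is the one-dimensional module with $\partial c_\eta=\eta c_\eta$ and all $\lambda$-actions zero. An extension $0\to V\to E\to W\to0$ is an exact sequence of modules; equivalence means a module homomorphism between middle terms compatible with the identities on the end terms; trivial means equivalent to the direct sum extension; $\mathrm{Ext}(W,V)$ is the vector space of equivalence classes of extensions of $W$ by $V$. *)

(* Defs.v *)
(* The base field C is modelled by an arbitrary
   numClosedFieldType F (algebraically closed, characteristic 0). *)
From HB Require Import structures.
From mathcomp Require Import all_boot all_order all_algebra.
Set Implicit Arguments. Unset Strict Implicit. Unset Printing Implicit Defensive.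
Import GRing.Theory.
Local Open Scope ring_scope.

(* The three C[d]-basis elements L, Y, M of TSV(a,b) and TSV(c). *)
Inductive gen := gL | gY | gM.

(* A "bracket table" br x y z d l : [x_l y] = sum_z br x y z (d, l) z,
   with d standing for the derivation (polynomial functions of (d,l)). *)
Definition brtable (F : fieldType) := gen -> gen -> gen -> F -> F -> F.

(* TSV(a,b).  Entries with the first argument M or (Y,L) are obtained by
   skew-symmetry [y_l x] = - [x_{-l-d} y]. *)
Definition br_TSVab (F : fieldType) (a b : F) : brtable F :=
  fun x y z d l =>
  match x, y, z with
  | gL, gL, gL => d + 2%:R * l
  | gL, gY, gY => d + a * l + b
  | gL, gM, gM => d + 2%:R * (a - 1) * l + 2%:R * b
  | gY, gL, gY => - (d + a * (- l - d) + b)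
  | gM, gL, gM => - (d + 2%:R * (a - 1) * (- l - d) + 2%:R * b)
  | gY, gY, gM => d + 2%:R * l
  | _, _, _ => 0
  end.

Definition br_TSVc (F : fieldType) (c : F) : brtable F :=
  fun x y z d l =>
  match x, y, z with
  | gL, gL, gL => d + 2%:R * l
  | gL, gY, gY => d + 3%:R / 2%:R * l + c
  | gL, gM, gM => d + 2%:R * c
  | gY, gL, gY => - (d + 3%:R / 2%:R * (- l - d) + c)
  | gM, gL, gM => - (d + 2%:R * c)
  | gY, gY, gM => (d + 2%:R * l) * (- d - 2%:R * c)
  | _, _, _ => 0
  end.

(* Data of a conformal module structure on a vector space V:
   the action of d and the lambda-actions of the generators, where
   cact g l v is the polynomial g_lambda v in V[lambda] evaluated at lambda = l. *)
Record cdata (F : fieldType) (V : lmodType F) := CData {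
  cdd : V -> V;
  cact : gen -> F -> V -> V }.

(* [x_l y]_{l+m} v, using (d a)_nu v = - nu a_nu v. *)
Definition jac_rhs (F : fieldType) (br : brtable F) (V : lmodType F) (D : cdata V)
  (x y : gen) (l m : F) (v : V) : V :=
  br x y gL (- (l + m)) l *: cact D gL (l + m) v
  + br x y gY (- (l + m)) l *: cact D gY (l + m) v
  + br x y gM (- (l + m)) l *: cact D gM (l + m) v.

(* V with data D is a conformal module over the Lie conformal algebra which is
   free over C[d] on L, Y, M with bracket table br.  Identities in V[lambda]
   and V[lambda,mu] are stated pointwise (F is infinite). *)
Definition is_cmod (F : fieldType) (br : brtable F) (V : lmodType F) (D : cdata V) : Prop :=
  [/\ (forall (k : F) (u w : V), cdd D (k *: u + w) = k *: cdd D u + cdd D w),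
      (forall g l (k : F) (u w : V), cact D g l (k *: u + w) = k *: cact D g l u + cact D g l w),
      (forall g (v : V), exists ws : seq V,
          forall l, cact D g l v = \sum_(i < size ws) l ^+ i *: ws`_i),
      (forall g l (v : V), cact D g l (cdd D v) = cdd D (cact D g l v) + l *: cact D g l v) &
      (forall x y l m (v : V),
          cact D x l (cact D y m v) - cact D y m (cact D x l v) = jac_rhs br D x y l m v)].

Definition is_hom (F : fieldType) (V W : lmodType F) (DV : cdata V) (DW : cdata W)
  (f : V -> W) : Prop :=
  [/\ (forall (k : F) (u w : V), f (k *: u + w) = k *: f u + f w),
      (forall v, f (cdd DV v) = cdd DW (f v)) &
      (forall g l v, f (cact DV g l v) = cact DW g l (f v))].

Definition is_ext (F : fieldType) (br : brtable F) (V W E : lmodType F)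
  (DV : cdata V) (DW : cdata W) (DE : cdata E) (i : V -> E) (p : E -> W) : Prop :=
  [/\ is_cmod br DE, is_hom DV DE i /\ is_hom DE DW p,
      injective i,
      (forall w, exists e, p e = w) &
      (forall e, p e = 0 <-> exists v, i v = e)].

Definition ext_equiv (F : fieldType) (V W E E' : lmodType F)
  (DE : cdata E) (i : V -> E) (p : E -> W)
  (DE' : cdata E') (i' : V -> E') (p' : E' -> W) : Prop :=
  exists phi : E -> E', [/\ is_hom DE DE' phi,
                            (forall v, phi (i v) = i' v) &
                            (forall e, p' (phi e) = p e)].

Definition dsum (F : fieldType) (V W : lmodType F) (DV : cdata V) (DW : cdata W)
  : cdata (V * W)%type :=
  CData (fun vw : V * W => (cdd DV vw.1, cdd DW vw.2))
        (fun g l (vw : V * W) => (cact DV g l vw.1, cact DW g l vw.2)).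

Definition ext_trivial (F : fieldType) (V W E : lmodType F)
  (DV : cdata V) (DW : cdata W) (DE : cdata E) (i : V -> E) (p : E -> W) : Prop :=
  ext_equiv (dsum DV DW) (fun v => (v, 0)) (fun vw => vw.2) DE i p.

(* (E', i', p') represents k.[ (E, i, p) ] in Ext(W,V): there is a morphism of
   extensions E -> E' which is multiplication by k on V and the identity on W
   (the pushout of E along k.id_V). *)
Definition ext_scal (F : fieldType) (V W E E' : lmodType F) (k : F)
  (DE : cdata E) (i : V -> E) (p : E -> W)
  (DE' : cdata E') (i' : V -> E') (p' : E' -> W) : Prop :=
  exists psi : E -> E', [/\ is_hom DE DE' psi,
                            (forall v, psi (i v) = i' (k *: v)) &
                            (forall e, p' (psi e) = p e)].

(* dim Ext(W, V) = 1: Ext(W,V) is spanned by a single nonzero class. *)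
Definition Ext_dim1 (F : fieldType) (br : brtable F) (V W : lmodType F)
  (DV : cdata V) (DW : cdata W) : Prop :=
  exists (E0 : lmodType F) (DE0 : cdata E0) (i0 : V -> E0) (p0 : E0 -> W),
    [/\ is_ext br DV DW DE0 i0 p0,
        ~ ext_trivial DV DW DE0 i0 p0 &
        forall (E : lmodType F) (DE : cdata E) (i : V -> E) (p : E -> W),
          is_ext br DV DW DE i p -> exists k : F, ext_scal k DE0 i0 p0 DE i p].

Definition nontriv_ext_exists (F : fieldType) (br : brtable F) (V W : lmodType F)
  (DV : cdata V) (DW : cdata W) : Prop :=
  exists (E : lmodType F) (DE : cdata E) (i : V -> E) (p : E -> W),
    is_ext br DV DW DE i p /\ ~ ext_trivial DV DW DE i p.

(* The rank one module C[d]v, v represented by the polynomial 1: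
   L_l v = (d + alpha l + beta) v, Y_l v = gamma v, M_l v = 0, so that
   x_l (q(d) v) = q(d + l) x_l v. *)
Definition Mabg (F : fieldType) (alpha beta gamma : F) : cdata {poly F} :=
  CData (fun q => 'X * q)
        (fun g l q => match g with
                      | gL => (q \Po ('X + l%:P)) * ('X + (alpha * l + beta)%:P)
                      | gY => (q \Po ('X + l%:P)) * gamma%:P
                      | gM => 0
                      end).

Definition Mab (F : fieldType) (alpha beta : F) : cdata {poly F} := Mabg alpha beta 0.

Definition Ceta (F : fieldType) (eta : F) : cdata F^o :=
  CData (fun x : F^o => eta * x) (fun _ _ _ => 0).

(* The extension E_k = C[d]v (+) C c_eta of C c_eta by the module DV (on C[d]v),
   with L_l c = k v, Y_l c = M_l c = 0, d c = eta c + k v.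
   An element (q, x) stands for q(d) v + x c. *)
Definition Ek (F : fieldType) (DV : cdata {poly F}) (eta k : F)
  : cdata ({poly F} * F^o)%type :=
  CData (fun qx : {poly F} * F^o => (cdd DV qx.1 + (qx.2 * k)%:P, eta * qx.2))
        (fun g l (qx : {poly F} * F^o) =>
           match g with
           | gL => (cact DV gL l qx.1 + (qx.2 * k)%:P, 0)
           | _ => (cact DV g l qx.1, 0)
           end).

Definition Ek_inj (F : fieldType) (q : {poly F}) : ({poly F} * F^o)%type := (q, 0).
Definition Ek_proj (F : fieldType) (qx : ({poly F} * F^o)%type) : F^o := qx.2.

(* Main.v *)
Require Import Defs.
From HB Require Import structures.
From mathcomp Require Import all_boot all_order all_algebra.
From mathcomp Require Import ring.
Set Implicit Arguments. Unset Strict Implicit. Unset Printing Implicit Defensive.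
Import GRing.Theory.
Local Open Scope ring_scope.

Section Lin.
Variables (F : fieldType) (V W : lmodType F) (f : V -> W).
Hypothesis hf : forall (k : F) (u w : V), f (k *: u + w) = k *: f u + f w.
Lemma lin0 : f 0 = 0.
Proof. by have := hf (-1) 0 0; rewrite scaler0 addr0 scaleN1r addNr. Qed.
Lemma linD u w : f (u + w) = f u + f w.
Proof. by have := hf 1 u w; rewrite !scale1r. Qed.
Lemma linZ k u : f (k *: u) = k *: f u.
Proof. by rewrite -[k *: u]addr0 hf lin0 addr0. Qed.
Lemma linN u : f (- u) = - f u.
Proof. by rewrite -scaleN1r linZ scaleN1r. Qed.
Lemma linB u w : f (u - w) = f u - f w.
Proof. by rewrite linD linN. Qed.
End Lin.

Lemma scaleFo (F : fieldType) (a : F) (b : F^o) : a *: b = a * b.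
Proof. by []. Qed.

Lemma XaddC_neq0 (F : fieldType) (c : F) : 'X + c%:P != 0.
Proof. by rewrite -size_poly_eq0 size_XaddC. Qed.

Lemma XaddC_eq (F : fieldType) (c d : F) (G : {poly F}) :
  ('X + c%:P) * G = d%:P -> d = 0 /\ G = 0.
Proof.
move=> h; have hd : d = 0.
  by have := congr1 (fun q => q.[-c]) h; rewrite hornerM !hornerE addNr mul0r.
split => //; move: h; rewrite hd => /eqP; rewrite mulf_eq0 (negbTE (XaddC_neq0 c)) /=.
by move/eqP.
Qed.

Lemma zmod1 (V : zmodType) (A B K C : V) : A - B + K + C - A = C - B + K.
Proof. by rewrite (AC (5) (((4*2)*3)*(1*5))) /= subrr addr0. Qed.

Section Decomp.
Variables (F : fieldType) (br : brtable F) (al be ga eta : F) (E : lmodType F)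
  (DE : cdata E) (i : {poly F} -> E) (p : E -> F^o).
Hypothesis Hext : is_ext br (Mabg al be ga) (Ceta eta) DE i p.

Lemma decomp : exists (c : E) (ka : F),
  [/\ p c = 1, cdd DE c = eta *: c + i ka%:P,
      (forall l, cact DE gY l c = 0), (forall l, cact DE gM l c = 0) &
      (forall l, exists G, cact DE gL l c = i G /\
           ('X + (l - eta)%:P) * G = ka%:P * ('X + (al * l + be)%:P))]
  /\ ka * ga = 0.
Proof.
case: Hext => [[cddL actL _ rel _] [[iL icdd iact] [pL pcdd pact]] iinj psurj pex].
have [c pc] := psurj 1.
have [f hf] : exists f, i f = cdd DE c - eta *: c.
  apply/pex; rewrite (linB pL) (linZ pL) pcdd /= pc.
  by rewrite /GRing.scale /= mulr1 subrr.
pose ka := f.[eta].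
have : root (f - ka%:P) eta by rewrite rootE hornerD hornerN hornerC subrr.
case/factor_theorem => r hr.
have hf' : f = 'X * r - eta *: r + ka%:P.
  by rewrite -mul_polyC; apply: (subIr ka%:P); rewrite hr; ring.
have pir : forall q, p (i q) = 0 by move=> q; apply/pex; exists q.
have Hcdd : cdd DE (c - i r) = eta *: (c - i r) + i ka%:P.
  rewrite (linB cddL) -icdd /=.
  have -> : cdd DE c = i f + eta *: c by rewrite hf subrK.
  rewrite hf' (linD iL) (linB iL) (linZ iL) scalerBr.
  exact: zmod1.
have act_eq : forall g l, exists G, cact DE g l (c - i r) = i G /\
    eta *: G + cact (Mabg al be ga) g l ka%:P = 'X * G + l *: G.
  move=> g l.
  have [G hG] : exists G, i G = cact DE g l (c - i r).
    by apply/pex; rewrite pact.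
  exists G; split => //; apply: iinj.
  have icdd' : forall v, i ('X * v) = cdd DE (i v) := icdd.
  rewrite (linD iL) (linZ iL) hG iact (linD iL) (linZ iL) icdd' hG.
  by rewrite -(actL g l) -rel Hcdd.
have Yeq : forall l, ka * ga = 0 /\ cact DE gY l (c - i r) = 0.
  move=> l; have [G [-> h]] := act_eq gY l.
  move: h; rewrite /= comp_polyC -polyCM => h.
  have : ('X + (l - eta)%:P) * G = (ka * ga)%:P.
    by apply: (addrI (eta *: G)); rewrite h -!mul_polyC polyCB; ring.
  by case/XaddC_eq => -> ->; rewrite (lin0 iL).
exists (c - i r), ka; split; last exact: (Yeq 0).1; split.
- by rewrite (linB pL) pc pir subr0.
- exact: Hcdd.
- by move=> l; case: (Yeq l).
- move=> l; have [G [-> h]] := act_eq gM l.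
  have : ('X + (l - eta)%:P) * G = 0%:P.
    move: h; rewrite /= addr0 => h; rewrite polyC0.
    transitivity ('X * G + l *: G - eta *: G); last by rewrite -h subrr.
    rewrite -!mul_polyC polyCB; ring.
  by case/XaddC_eq => _ ->; rewrite (lin0 iL).
- move=> l; have [G [-> h]] := act_eq gL l; exists G; split => //.
  move: h; rewrite /= comp_polyC => h.
  by apply: (addrI (eta *: G)); rewrite h -!mul_polyC polyCB; ring.
Qed.

Lemma decomp2 : exists (c : E) (ka : F),
  [/\ p c = 1, cdd DE c = eta *: c + i ka%:P,
      (forall l, cact DE gL l c = i ka%:P),
      (forall l, cact DE gY l c = 0) /\ (forall l, cact DE gM l c = 0) &
      (ka != 0 -> [/\ al = 1, be + eta = 0 & ga = 0])].
Proof.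
have [c [ka [[pc cddc Yc Mc Lc] kg]]] := decomp.
have cond : ka != 0 -> [/\ al = 1, be + eta = 0 & ga = 0].
  move=> kn0.
  have ev : forall l, ka * (eta - l + (al * l + be)) = 0.
    move=> l; have [G [_ h]] := Lc l.
    have := congr1 (fun q => q.[eta - l]) h; rewrite !hornerM !hornerD hornerX !hornerC.
    by move=> <-; apply/eqP; rewrite mulf_eq0; apply/orP; left; apply/eqP; ring.
  move/eqP: (ev 0); rewrite mulf_eq0 (negbTE kn0) /= => /eqP e0.
  move/eqP: (ev 1); rewrite mulf_eq0 (negbTE kn0) /= => /eqP e1.
  have hbe : be + eta = 0 by rewrite -e0; ring.
  split => //.
    apply/eqP; rewrite -subr_eq0; apply/eqP.
    transitivity ((eta - 1 + (al * 1 + be)) - (be + eta)); first ring.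
    by rewrite e1 hbe subrr.
  by move/eqP: kg; rewrite mulf_eq0 (negbTE kn0) => /eqP.
exists c, ka; split => //.
move=> l; have [G [-> h]] := Lc l; congr (i _).
have h2 : ('X + (l - eta)%:P) * (G - ka%:P) = 0.
  have [k0|kn0] := eqVneq ka 0.
    by move: h; rewrite k0 mul0r => h; rewrite mulrBr h mulr0 subr0.
  have [a1 hb _] := cond kn0.
  rewrite mulrBr h a1 mul1r; have -> : be = - eta by rewrite -(subr0 be) -hb; ring.
  ring.
move/eqP: h2; rewrite mulf_eq0 (negbTE (XaddC_neq0 _)) /= subr_eq0.
by move/eqP.
Qed.

Section WithC.
Variables (c : E) (ka : F).
Hypotheses (pc : p c = 1) (cddc : cdd DE c = eta *: c + i ka%:P)
  (Lc : forall l, cact DE gL l c = i ka%:P)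
  (Yc : forall l, cact DE gY l c = 0) (Mc : forall l, cact DE gM l c = 0).

Lemma triv_ka : ext_trivial (Mabg al be ga) (Ceta eta) DE i p -> ka = 0.
Proof.
case: Hext => [[cddL actL _ rel _] [[iL icdd iact] [pL pcdd pact]] iinj psurj pex].
case=> phi [[phL phcdd phact] phi_i phi_p].
set c2 := phi (0, 1).
have pc2 : p c2 = 1 by rewrite /c2 phi_p.
have cdd2 : cdd DE c2 = eta *: c2.
  rewrite /c2 -phcdd /= mulr0 mulr1.
  have -> : (0 : {poly F}, eta : F^o) = eta *: (0, 1 : F^o) + 0.
    by rewrite addr0 (_ : eta *: (0:{poly F}, 1:F^o) = (eta *: 0, eta * 1)) // scaler0 mulr1.
  by rewrite phL (lin0 phL) addr0.
have [u hu] : exists u, i u = c2 - c by apply/pex; rewrite (linB pL) pc2 pc subrr.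
have hc2 : c2 = c + i u by rewrite hu addrC subrK.
have : i (eta *: u) = i (ka%:P + 'X * u).
  move: cdd2; rewrite hc2 (linD cddL) cddc scalerDr (linZ iL) (linD iL).
  have icdd' : forall v, i ('X * v) = cdd DE (i v) := icdd.
  rewrite icdd' -addrA => /addrI ->; done.
move/iinj => h; have := congr1 (fun q => q.[eta]) h.
rewrite hornerZ hornerD hornerC hornerM hornerX => e.
by apply: (addIr (eta * u.[eta])); rewrite add0r -e.
Qed.

Lemma ka0_triv : ka = 0 -> ext_trivial (Mabg al be ga) (Ceta eta) DE i p.
Proof.
case: Hext => [[cddL actL _ rel _] [[iL icdd iact] [pL pcdd pact]] iinj psurj pex].
move=> k0.
have pir : forall q, p (i q) = 0 by move=> q; apply/pex; exists q.
exists (fun e => i e.1 + e.2 *: c); split.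
- split.
  + move=> k u w /=; rewrite iL scalerDl -scalerA scalerDr.
    by rewrite (AC (2*2) ((1*3)*(2*4))).
  + move=> [v x] /=; rewrite (linD cddL) (linZ cddL) cddc k0 polyC0 (lin0 iL) addr0.
    by rewrite -icdd scalerA [x * eta]mulrC.
  + move=> g l [v x] /=; rewrite (linD (actL g l)) (linZ (actL g l)) -iact.
    by case: g; rewrite ?Lc ?Yc ?Mc ?k0 ?polyC0 ?(lin0 iL) scaler0 scale0r.
- by move=> v /=; rewrite scale0r addr0.
- by move=> [v x] /=; rewrite (linD pL) (linZ pL) pir pc add0r /GRing.scale /= mulr1.
Qed.

Lemma psi_hom (s k0 : F) : s * k0 = ka ->
  ext_scal s (Ek (Mabg al be ga) eta k0) (@Ek_inj F) (@Ek_proj F) DE i p.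
Proof.
case: Hext => [[cddL actL _ rel _] [[iL icdd iact] [pL pcdd pact]] iinj psurj pex].
move=> hs.
have pir : forall q, p (i q) = 0 by move=> q; apply/pex; exists q.
have hC : forall x : F, s *: i (x * k0)%:P = x *: i ka%:P.
  by move=> x; rewrite -!(linZ iL) -!mul_polyC -!polyCM -hs; congr (i _%:P); ring.
exists (fun e => s *: i e.1 + e.2 *: c); split.
- split.
  + move=> k u w /=; rewrite iL !scalerDr !scalerDl !scalerA.
    by rewrite (AC (2*2) ((1*3)*(2*4))) /= [s * k]mulrC.
  + move=> [v x] /=; rewrite (linD cddL) (linZ cddL) (linZ cddL) cddc.
    rewrite (linD iL) scalerDr hC -icdd /= scalerDr scalerA [x * eta]mulrC.
    by rewrite -addrA (addrC (x *: _)).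
  + move=> g l [v x] /=; rewrite (linD (actL g l)) !(linZ (actL g l)) -iact.
    case: g => /=; rewrite ?Lc ?Yc ?Mc ?scaler0 ?addr0 ?scale0r ?addr0 //.
    by rewrite (linD iL) scalerDr hC.
- by move=> v /=; rewrite scale0r addr0 (linZ iL).
- by move=> [v x] /=; rewrite (linD pL) !(linZ pL) pir pc scaler0 add0r /GRing.scale /= mulr1.
Qed.

End WithC.
End Decomp.

Lemma mapC_horner (F : fieldType) (q y : {poly F}) : (q^:P).[y] = q \Po y.
Proof.
rewrite comp_polyE horner_coef size_map_polyC.
by apply: eq_bigr => j _; rewrite coef_map /= mul_polyC.
Qed.

Lemma polyl (F : fieldType) (A : {poly {poly F}}) :
  forall l, A.[l%:P] = \sum_(j < size A) l ^+ j *: A`_j.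
Proof.
move=> l; rewrite horner_coef; apply: eq_bigr => j _.
by rewrite -polyC_exp mulrC mul_polyC.
Qed.

Lemma sum_pair0 (F : fieldType) n (a : 'I_n -> {poly F}) :
  \sum_(j < n) ((a j, 0) : {poly F} * F^o) = (\sum_(j < n) a j, 0).
Proof.
elim: n a => [|n IH] a; first by rewrite !big_ord0.
rewrite big_ord_recr [in RHS]big_ord_recr /= IH.
have -> : forall u v : {poly F}, ((u, 0) + (v, 0) : {poly F} * F^o) = (u + v, 0 + 0) by [].
by rewrite addr0.
Qed.

Lemma pair_eq (A B : Type) (x y : A * B) : x.1 = y.1 -> x.2 = y.2 -> x = y.
Proof. by case: x; case: y => /= ? ? ? ? -> ->. Qed.

Section EkMod.
Variables (F : fieldType) (br : brtable F) (be eta k0 : F).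
Hypothesis hb : be + eta = 0.
Hypothesis Hbr : forall x y d l, br x y gL d l =
  match x, y with gL, gL => d + 2%:R * l | _, _ => 0 end.

Let DV := Mabg 1 be 0.
Let DEk := Ek DV eta k0.

Lemma EkY l v : cact DEk gY l v = 0.
Proof. by rewrite /= polyC0 mulr0. Qed.
Lemma EkM l v : cact DEk gM l v = 0.
Proof. by []. Qed.
Lemma Ek0 g l : cact DEk g l 0 = 0.
Proof.
have s0 : (0 : {poly F} * F^o).2 = 0 by [].
have f0 : (0 : {poly F} * F^o).1 = 0 by [].
by case: g; apply: pair_eq; rewrite /= ?s0 ?f0 ?comp_poly0 ?mul0r ?polyC0 ?addr0. Qed.
Lemma Ekcdd0 : cdd DEk 0 = 0.
Proof. by rewrite /= mulr0 mul0r polyC0 addr0 mulr0. Qed.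

Lemma Ek_cmod : is_cmod br DEk.
Proof.
have hbe : be = - eta by rewrite -(subr0 be) -hb; ring.
split.
- move=> k [u1 u2] [w1 w2]; apply: pair_eq => /=.
    rewrite scaleFo -!mul_polyC; ring.
  rewrite !scaleFo; ring.
- move=> g l k [u1 u2] [w1 w2]; case: g; apply: pair_eq => /=;
    rewrite ?scaler0 ?addr0 //.
  + rewrite comp_polyD comp_polyZ scaleFo -!mul_polyC; ring.
  + by rewrite polyC0 !mulr0 scaler0 addr0.
- move=> g [q x]; case: g; last 2 first.
  + by exists [::] => l; rewrite big_ord0 EkY.
  + by exists [::] => l; rewrite big_ord0 EkM.
  pose A : {poly {poly F}} := (q^:P \Po ('X + ('X)%:P)) * (('X)%:P + 'X + be%:P%:P)
     + (x * k0)%:P%:P.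
  exists (map (fun w => ((w, 0) : {poly F} * F^o)) A) => l.
  rewrite size_map.
  have -> : \sum_(j < size A) l ^+ j *: (map (fun w => ((w, 0) : {poly F} * F^o)) A)`_j
         = \sum_(j < size A) ((l ^+ j *: A`_j, 0) : {poly F} * F^o).
    apply: eq_bigr => j _; rewrite (nth_map 0) //.
    have -> : forall (c : F) (a : {poly F}),
      c *: ((a, 0) : {poly F} * F^o) = (c *: a, c *: (0 : F^o)) by [].
    by rewrite scaler0.
  rewrite sum_pair0 -polyl; apply: pair_eq => //=.
  rewrite /A hornerD hornerM horner_comp mapC_horner !hornerD hornerX !hornerC.
  rewrite [l%:P + 'X]addrC mul1r; ring.
- move=> g l [q x]; case: g; last 2 first.
  + by rewrite !EkY Ekcdd0 scaler0 addr0.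
  + by rewrite !EkM Ekcdd0 scaler0 addr0.
  apply: pair_eq => /=; last by rewrite mulr0 /GRing.scale /= mulr0 addr0.
  rewrite comp_polyD comp_polyM comp_polyX comp_polyC mul1r hbe mul0r polyC0 addr0.
  rewrite -!mul_polyC; ring.
- move=> x y l m [q z].
  rewrite /jac_rhs !EkY !EkM !scaler0 !addr0 Hbr.
  case: x; case: y; rewrite ?EkY ?EkM ?Ek0 ?subrr ?scale0r //.
  apply: pair_eq => /=; last by rewrite subrr /GRing.scale /= mulr0.
  rewrite !mul1r !mul0r polyC0 !addr0.
  rewrite !comp_polyD !comp_polyM -!comp_polyA !comp_polyD !comp_polyX !comp_polyC.
  have e1 : 'X + l%:P + m%:P = 'X + (l + m)%:P by rewrite polyCD addrA.
  have e2 : 'X + m%:P + l%:P = 'X + (l + m)%:P by rewrite polyCD addrA (addrAC 'X).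
  rewrite e1 e2; set Q := q \Po _.
  rewrite -!mul_polyC; ring.
Qed.

Lemma Ek_ext : is_ext br DV (Ceta eta) DEk (@Ek_inj F) (@Ek_proj F).
Proof.
split.
- exact: Ek_cmod.
- split; split.
  + by move=> k u w; apply: pair_eq => /=; rewrite ?mul0r ?polyC0 ?addr0 ?scaler0.
  + by move=> v; apply: pair_eq => /=; rewrite ?mul0r ?polyC0 ?addr0 ?mulr0.
  + by move=> g l v; case: g; apply: pair_eq => /=; rewrite ?mul0r ?polyC0 ?addr0.
  + by [].
  + by [].
  + by move=> g l v; case: g.
- by move=> u w [].
- by move=> w; exists (0, w).
- move=> [q x] /=; split.
    by move=> ->; exists q.
  by case=> v [].
Qed.
End EkMod.

Section Master.
Variables (F : fieldType) (br : brtable F).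
Hypothesis Hbr : forall x y d l, br x y gL d l =
  match x, y with gL, gL => d + 2%:R * l | _, _ => 0 end.

Lemma Ek_c1 (be eta k0 : F) :
  cdd (Ek (Mabg 1 be 0) eta k0) ((0, 1) : {poly F} * F^o)
  = eta *: ((0, 1) : {poly F} * F^o) + Ek_inj k0%:P.
Proof.
apply: pair_eq => /=; first by rewrite mulr0 mul1r add0r scaler0 add0r.
by rewrite scaleFo mulr1 addr0.
Qed.

Lemma master (al be ga eta : F) :
  (nontriv_ext_exists br (Mabg al be ga) (Ceta eta) <-> [/\ be + eta = 0, al = 1 & ga = 0])
  /\ (be + eta = 0 -> al = 1 -> ga = 0 ->
      Ext_dim1 br (Mabg al be ga) (Ceta eta) /\
      (forall (E : lmodType F) (DE : cdata E) (i : {poly F} -> E) (p : E -> F^o),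
         is_ext br (Mabg al be ga) (Ceta eta) DE i p ->
         ~ ext_trivial (Mabg al be ga) (Ceta eta) DE i p ->
         exists k : F, k != 0 /\
           ext_equiv (Ek (Mabg al be ga) eta k) (@Ek_inj F) (@Ek_proj F) DE i p)).
Proof.
split.
  split.
    case=> E [DE [i [p [Hx Hnt]]]].
    have [c [ka [pc cddc Lc [Yc Mc] cond]]] := decomp2 Hx.
    have [k0|kn0] := eqVneq ka 0; last by case: (cond kn0).
    by case: Hnt; exact: (ka0_triv Hx pc cddc Lc Yc Mc k0).
  case=> hb a1 g0; subst al ga.
  exists _, (Ek (Mabg 1 be 0) eta 1), (@Ek_inj F), (@Ek_proj F).
  have Hx := Ek_ext 1 hb Hbr.
  split => // /(triv_ka Hx (c := (0, 1)) (ka := 1)) h.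
  by have := h erefl (Ek_c1 be eta 1) => /eqP; rewrite oner_eq0.
move=> hb a1 g0; subst al ga.
have Hx := Ek_ext 1 hb Hbr.
split.
  exists _, (Ek (Mabg 1 be 0) eta 1), (@Ek_inj F), (@Ek_proj F); split => //.
    move/(triv_ka Hx (c := (0, 1)) (ka := 1)) => h.
    by have := h erefl (Ek_c1 be eta 1) => /eqP; rewrite oner_eq0.
  move=> E DE i p HE.
  have [c [ka [pc cddc Lc [Yc Mc] _]]] := decomp2 HE.
  exists ka; apply: (psi_hom HE pc cddc Lc Yc Mc); exact: mulr1.
move=> E DE i p HE Hnt.
have [c [ka [pc cddc Lc [Yc Mc] _]]] := decomp2 HE.
have [k0|kn0] := eqVneq ka 0.
  by case: Hnt; exact: (ka0_triv HE pc cddc Lc Yc Mc k0).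
exists ka; split => //.
have [psi [h1 h2 h3]] := psi_hom HE pc cddc Lc Yc Mc (s := 1) (k0 := ka) (mul1r ka).
by exists psi; split => // v; rewrite h2 scale1r.
Qed.
End Master.

Lemma Hbr_ab (F : fieldType) (a b : F) : forall x y d l, br_TSVab a b x y gL d l =
  match x, y with gL, gL => d + 2%:R * l | _, _ => 0 end.
Proof. by case; case. Qed.

Lemma Hbr_c (F : fieldType) (c : F) : forall x y d l, br_TSVc c x y gL d l =
  match x, y with gL, gL => d + 2%:R * l | _, _ => 0 end.
Proof. by case; case. Qed.

Theorem theorem4p6 (F : numClosedFieldType) :
  (* (1)(i) TSV(a,b), (a,b) <> (1,0) *)
  (forall a b : F, (a, b) <> (1, 0) ->
   forall alpha beta eta : F, alpha != 0 ->
     (nontriv_ext_exists (br_TSVab a b) (Mab alpha beta) (Ceta eta)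
        <-> (beta + eta = 0 /\ alpha = 1))
     /\ (beta + eta = 0 -> alpha = 1 ->
         Ext_dim1 (br_TSVab a b) (Mab 1 beta) (Ceta (- beta))
         /\ (forall (E : lmodType F) (DE : cdata E) (i : {poly F} -> E) (p : E -> F^o),
               is_ext (br_TSVab a b) (Mab alpha beta) (Ceta eta) DE i p ->
               ~ ext_trivial (Mab alpha beta) (Ceta eta) DE i p ->
               exists k : F, k != 0 /\
                 ext_equiv (Ek (Mab alpha beta) eta k) (@Ek_inj F) (@Ek_proj F) DE i p)))
  /\
  (* (1)(ii) TSV(1,0) *)
  (forall alpha beta gamma eta : F, (alpha, gamma) <> (0, 0) ->
     (nontriv_ext_exists (br_TSVab 1 0) (Mabg alpha beta gamma) (Ceta eta)
        <-> (beta + eta = 0 /\ (alpha, gamma) = (1, 0)))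
     /\ (beta + eta = 0 -> (alpha, gamma) = (1, 0) ->
         Ext_dim1 (br_TSVab 1 0) (Mabg 1 beta 0) (Ceta (- beta))
         /\ (forall (E : lmodType F) (DE : cdata E) (i : {poly F} -> E) (p : E -> F^o),
               is_ext (br_TSVab 1 0) (Mabg alpha beta gamma) (Ceta eta) DE i p ->
               ~ ext_trivial (Mabg alpha beta gamma) (Ceta eta) DE i p ->
               exists k : F, k != 0 /\
                 ext_equiv (Ek (Mabg alpha beta gamma) eta k) (@Ek_inj F) (@Ek_proj F)
                   DE i p)))
  /\
  (* (2) TSV(c) *)
  (forall c : F,
   forall alpha beta eta : F, alpha != 0 ->
     (nontriv_ext_exists (br_TSVc c) (Mab alpha beta) (Ceta eta)
        <-> (beta + eta = 0 /\ alpha = 1))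
     /\ (beta + eta = 0 -> alpha = 1 ->
         Ext_dim1 (br_TSVc c) (Mab 1 beta) (Ceta (- beta))
         /\ (forall (E : lmodType F) (DE : cdata E) (i : {poly F} -> E) (p : E -> F^o),
               is_ext (br_TSVc c) (Mab alpha beta) (Ceta eta) DE i p ->
               ~ ext_trivial (Mab alpha beta) (Ceta eta) DE i p ->
               exists k : F, k != 0 /\
                 ext_equiv (Ek (Mab alpha beta) eta k) (@Ek_inj F) (@Ek_proj F) DE i p))).
Proof.
split; [|split].
- move=> a b _ al be eta _; rewrite /Mab.
  have [h1 h2] := master (Hbr_ab a b) al be 0 eta.
  split.
    by split => [/h1 [? ? _] // | [? ?]]; apply/h1; split.
  move=> hb ha; split; last exact: (h2 hb ha erefl).2.
  exact: ((master (Hbr_ab a b) 1 be 0 (- be)).2 (subrr be) erefl erefl).1.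
- move=> al be ga eta _.
  have [h1 h2] := master (Hbr_ab (1 : F) 0) al be ga eta.
  split.
    split => [/h1 [? -> ->] // | [hb e]]; apply/h1; case: e => -> ->; by split.
  move=> hb [ha hg]; split; last exact: (h2 hb ha hg).2.
  exact: ((master (Hbr_ab (1 : F) 0) 1 be 0 (- be)).2 (subrr be) erefl erefl).1.
- move=> c al be eta _; rewrite /Mab.
  have [h1 h2] := master (Hbr_c c) al be 0 eta.
  split.
    by split => [/h1 [? ? _] // | [? ?]]; apply/h1; split.
  move=> hb ha; split; last exact: (h2 hb ha erefl).2.
  exact: ((master (Hbr_c c) 1 be 0 (- be)).2 (subrr be) erefl erefl).1.
Qed.
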